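(* Let $q$ be a prime power, $m>3$, $n=q^m-1$, and define $Z_{des}=\{(x,y): 1\le x,y<n,\ xy<q^m-1-q^{\lfloor m/2\rfloor}\}$ and, for integers $0\le k\le (m-1)/2$, $Z_{des,k}=\{(x,y)\in Z_{des}: q^k-1<x\le q^{k+1}-1\}$. For $l\in\{0,1,\dots,m-1\}$ let $f(x,y,l)=(-xq^l\bmod n)\,(-yq^l\bmod n)$, where $a\bmod n\in\{0,\dots,n-1\}$. Then: (a) For every $0\le k\le (m-1)/2$, every $(x,y)\in Z_{des,k}$ and every $l\in\{0,\dots,m-1\}$ with $l\ne m-k-1$, one has $f(x,y,l)\ge q^m-1-q^{\lceil m/2\rceil-1}$, and this value is attained (for $k=0$, $x=1$, $y=q^m-1-q^{\lfloor m/2\rfloor+1}$, $l=\lceil m/2\rceil-1$). (b) For every $0\le k\le (m-1)/2$, every $(x,y)\in Z_{des,k}$ and $l=m-k-1$: if $m$ is odd then $f(x,y,l)\ge q^m-1$; if $m$ is even then $f(x,y,l)\ge (q^{m/2}-1)^2$, with equality attained at $k=m/2-1$, $l=m/2$, $x=y=q^{m/2}-1$.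
   Context: Here $a\bmod n$ denotes the least nonnegative residue of $a$ modulo $n$. *)

(* Defs.v *)
From mathcomp Require Import all_boot.
Set Implicit Arguments. Unset Strict Implicit. Unset Printing Implicit Defensive.

Definition prime_power (q : nat) : Prop :=
  exists p e, prime p /\ 0 < e /\ q = p ^ e.

Definition negmod (n a : nat) : nat := (n - a %% n) %% n.

Definition fval (q m x y l : nat) : nat :=
  negmod (q ^ m - 1) (x * q ^ l) * negmod (q ^ m - 1) (y * q ^ l).

Definition in_Zdes (q m x y : nat) : bool :=
  [&& 1 <= x, x < q ^ m - 1, 1 <= y, y < q ^ m - 1
    & x * y < q ^ m - 1 - q ^ (m./2)].

Definition in_Zdesk (q m k x y : nat) : bool :=
  in_Zdes q m x y && (q ^ k - 1 < x <= q ^ k.+1 - 1).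

(* Main.v *)
Require Import Defs.
From mathcomp Require Import all_boot.
From mathcomp Require zify.
From Stdlib Require Import Lia.


Lemma rotE J R x : 0 < J -> 0 < R -> 0 < x -> x < J*R - 1 ->
  negmod (J*R - 1) (x*R) = J*R - 1 - (x %% J * R + x %/ J).
Proof.
move=> J0 R0 x0 xlt.
have hd := divn_eq x J.
have hr : x %% J < J by rewrite ltn_pmod.
have ha : x %/ J < R by rewrite ltn_divLR // ; lia.
set a := x %/ J in hd ha *; set r := x %% J in hd hr *.
set n := J*R - 1.
have tlt : r * R + a < n by rewrite /n; nia.
have tpos : 0 < r * R + a by nia.
have -> : x * R = a * n + (r * R + a) by rewrite /n; nia.
rewrite /negmod modnMDl (modn_small tlt) modn_small //; lia.
Qed.
Lemma mulge {a b c d} : c <= a -> d <= b -> c * d <= a * b.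
Proof. exact: leq_mul. Qed.

Lemma mulle2 a b c : c <= 2 * a -> 2 <= b -> c <= a * b.
Proof. move=> h1 h2; apply: leq_trans h1 _; by rewrite mulnC leq_mul2l h2 orbT. Qed.

Lemma caseA q J R x b s F G : 1 < q -> 0 < R -> (R = 1 \/ q*J <= J*R) -> 0 < x ->
  q*x < J -> s < J -> b < R -> 0 < b*J + s -> 0 < F ->
  x*(b*J+s) + F + 1 < J*R -> (F < J -> R <= G) ->
  J*R - 1 - G <= (J*R - 1 - x*R) * (J*R - 1 - (s*R + b)).
Proof.
move=> q1 R0 HR x0 qx sJ bR y0 F0 Hc HG.
case: HR => [R1|qJ].
  subst R. have b0 : b = 0 by lia. subst b.
  rewrite !muln1 !addn0 mul0n add0n in Hc *.
  apply: leq_trans (leq_subr _ _) _; apply: mulle2.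
    clear -qx q1; nia.
  clear -Hc x0 F0; nia.
have u2 : J*R - 1 <= 2 * (J*R - 1 - x*R).
  have : (q*x).+1*R <= J * R by rewrite leq_mul2r qx orbT.
  clear -q1 R0; nia.
case: (leqP 2 (J*R - 1 - (s*R + b))) => hv.
  apply: leq_trans (leq_subr _ _) _; exact: mulle2.
have J0 : 0 < J by clear -qx; lia.
have R2 : 2 <= R by clear -qJ q1 R0 J0; nia.
have sJ1 : s = J - 1.
  have : (J - 1) * R - 1 <= s * R by clear -hv bR; nia.
  clear -sJ R2; nia.
subst s.
have bR2 : b = R - 2.
  have : b <> R - 1.
    move=> E; subst b. have E2 : (R-1)*J + (J-1) = J*R - 1 by clear -R2 sJ; nia.
    rewrite E2 in Hc. clear -Hc x0 R2 sJ; nia.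
  clear -hv sJ R2 bR; nia.
subst b.
have x1 : x = 1.
  have : ~ (2 <= x).
    move=> h. have E2 : (R-2)*J + (J-1) = J*R - J - 1 by clear -R2 sJ; nia.
    rewrite E2 in Hc. have h2 : 2*J <= J*R by clear -qJ q1; nia.
    have h3 : 2 * (J*R - J - 1) <= x * (J*R - J - 1) by rewrite leq_mul2r h orbT.
    clear -h3 h2 Hc F0 R2 sJ. nia.
  lia.
subst x.
have FJ : F < J by clear -Hc R2 sJ; nia.
have := HG FJ. clear -R2 sJ. nia.
Qed.
Lemma caseB J R K A B a r b s x : 0 < J -> r < J -> s < J -> a < A ->
  K <= x -> x * (b*J + s) < J*R -> A <= B -> R = B*K -> J <= K -> 0 < K ->
  K*K <= B*((K-1)*(K-1)) ->
  J*R <= (J*R - 1 - (r*R + a)) * (J*R - 1 - (s*R + b)).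
Proof.
move=> J0 rJ sJ aA Kx Hc AB RBK JK K0 HK.
have bB : b < B.
  have h1 : K * (b*J) <= x * (b * J + s) by apply: leq_mul => //; apply: leq_addr.
  have h2 : b*(J*K) < B*(J*K) by subst R; clear -h1 Hc; nia.
  by rewrite ltn_pmul2r ?muln_gt0 ?J0 ?K0 in h2.
have hu : B*(K-1) <= J*R - 1 - (r*R + a).
  subst R. clear -rJ aA AB J0 K0. nia.
have hv : B*(K-1) <= J*R - 1 - (s*R + b).
  subst R. clear -sJ bB J0 K0. nia.
apply: leq_trans (leq_mul hu hv).
subst R. have h1 : B*(K*K) <= B*(B*((K-1)*(K-1))) by rewrite leq_mul2l HK orbT.
have h2 : J*(B*K) <= (B*K)*K by rewrite mulnC leq_mul2l JK orbT.
rewrite -mulnA in h2.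
apply: leq_trans h2 _; apply: leq_trans h1 _; by rewrite mulnACA -mulnA.
Qed.

Lemma caseC1 q J R K x b s F : 1 < q -> J = K*q -> q*J <= R -> K <= x -> x < J ->
  0 < x -> s < J -> 0 < b*J + s -> q*q <= F ->
  x*(b*J+s) + F + 1 < J*R ->
  J*R - 1 <= (J*R - 1 - x*R) * (J*R - 1 - (s*R + b)).
Proof.
move=> q1 JK qJR Kx xJ x0 sJ y0 Fq Hc.
have J2 : 2 <= J by clear -xJ x0 JK q1 Kx; nia.
have R4 : 2*J <= R by clear -qJR q1; nia.
have K0 : 0 < K by clear -JK J2; nia.
have bK : b*K < R.
  have h1 : K * (b*J) <= x * (b * J + s) by apply: leq_mul => //; apply: leq_addr.
  have h2 : (b*K)*J < R*J by clear -h1 Hc; nia.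
  by rewrite ltn_pmul2r ?(leq_trans _ J2) in h2.
set u := J*R - 1 - x*R.
set v := J*R - 1 - (s*R + b).
have hu : u + x*R + 1 = J*R by rewrite /u; clear -xJ R4; nia.
have hv : v + s*R + b + 1 = J*R by rewrite /v; clear -sJ bK K0 R4; nia.
have u1 : R - 1 <= u by clear -hu xJ; nia.
case: (ltnP s (J-1)) => hs.
  have v1 : R <= v by clear -hv hs bK K0; nia.
  apply: (leq_trans _ (mulge u1 v1)). clear -R4 J2; nia.
have sJ1 : s = J - 1 by clear -hs sJ; lia.
subst s.
case: (posnP b) => hb.
  subst b. have v1 : R - 1 <= v by clear -hv J2; nia.
  apply: (leq_trans _ (mulge u1 v1)). clear -R4 J2; nia.
case: (leqP x 1) => hx.
  have x1 : x = 1 by lia. subst x.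
  have K1 : K = 1 by lia. subst K. rewrite mul1n in JK. subst J.
  have v3 : 3 <= v by clear -hv Hc Fq q1 hb; nia.
  have u2 : q*R - 1 - R <= u by clear -hu; nia.
  apply: (leq_trans _ (mulge u2 v3)). clear -R4 q1; nia.
have xw : x*(b+1) <= R by clear -Hc xJ; nia.
have v2 : R <= 2 * v by clear -hv hx xw J2; nia.
case: (ltnP x (J-1)) => hx2.
  have u2 : 2*R - 1 <= u by clear -hu hx2; nia.
  have h := leq_mul u2 v2.
  clear -h R4 J2. nia.
have xJ1 : x = J - 1 by clear -hx2 xJ; lia.
subst x.
have uR : u = R - 1 by clear -hu J2; nia.
have hv' : v + b + 1 = R by clear -hv J2; nia.
case: (leqP 4 J) => J4.
  have v3 : 2*R <= 3*v by clear -hv' xw J4; nia.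
  rewrite uR. have h := leq_mul (leqnn (R-1)) v3.
  clear -h R4 J4. nia.
have J3 : J = 3 by clear -J4 hx; lia.
have q3 : q = 3.
  rewrite J3 in JK. clear -JK q1. move: JK q1; case: K => [|[|K]] /=; rewrite ?mul1n; try lia.
subst q J.
rewrite uR. have h := leq_mul (leqnn (R-1)) v2.
clear -h qJR. nia.
Qed.

Lemma caseC1e J K x b s : 2 <= K -> K <= x -> x < J -> 4 <= J -> s < J ->
  x*(b*J+s) < J*J ->
  (J-1)^2 <= (J*J - 1 - x*J) * (J*J - 1 - (s*J + b)).
Proof.
move=> K2 Kx xJ J4 sJ Hc.
have bK : b*K < J.
  have h1 : K * (b*J) <= x * (b * J + s) by apply: leq_mul => //; apply: leq_addr.
  have h2 : (b*K)*J < J*J by clear -h1 Hc; nia.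
  rewrite ltn_pmul2r in h2 => //. clear -J4; lia.
set u := J*J - 1 - x*J.
set v := J*J - 1 - (s*J + b).
have hu : u + x*J + 1 = J*J by rewrite /u; clear -xJ J4; nia.
have hv : v + s*J + b + 1 = J*J by rewrite /v; clear -sJ bK K2 J4; nia.
have u1 : J - 1 <= u by clear -hu xJ; nia.
rewrite expnS expn1.
case: (ltnP s (J-1)) => hs.
  have v1 : J - 1 <= v by clear -hv hs bK K2; nia.
  exact: mulge u1 v1.
have sJ1 : s = J - 1 by clear -hs sJ; lia.
subst s.
case: (posnP b) => hb.
  subst b. have v1 : J - 1 <= v by clear -hv J4; nia.
  exact: mulge u1 v1.
have xw : x*(b+1) <= J by clear -Hc xJ; nia.
have v2 : J <= 2 * v by clear -hv K2 Kx xw J4; nia.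
have u2 : J*J - 2 <= 2 * u by clear -hu xw hb; nia.
have h := leq_mul u2 v2.
clear -h J4. nia.
Qed.

Lemma caseC2 q R x b s : 1 < q -> 4 <= R -> R <= x -> x < q*R -> s < q*R ->
  x*(b*(q*R)+s) < q*R*R ->
  q*R*R - 1 <= (q*R*R - 1 - x*R) * (q*R*R - 1 - (s*R + b)).
Proof.
move=> q1 R4 Rx xJ sJ Hc.
have b0 : b = 0.
  have h1 : R * (b*(q*R)) <= x * (b*(q*R) + s) by apply: leq_mul => //; apply: leq_addr.
  have h2 : (b*R)*(q*R) < R*(q*R) by clear -h1 Hc; nia.
  rewrite ltn_pmul2r in h2; last by clear -q1 R4; nia.
  clear -h2 R4; nia.
subst b. rewrite addn0 in Hc *. rewrite mul0n add0n in Hc.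
set J := q*R in xJ sJ Hc *.
have J0 : 0 < J by rewrite /J; clear -q1 R4; nia.
have [c hc] : exists c, x + c = J by exists (J - x); clear -xJ; lia.
have [d hd] : exists d, s + d = J by exists (J - s); clear -sJ; lia.
have c1 : 1 <= c by clear -hc xJ; lia.
have d1 : 1 <= d by clear -hd sJ; lia.
have hu : J*R - 1 - x*R = c*R - 1 by rewrite -hc; clear; nia.
have hv : J*R - 1 - s*R = d*R - 1 by rewrite -hd; clear; nia.
rewrite hu hv.
have key : (x + s - J) * J <= x * s.
  have : (J - x) * (J - s) >= 0 by [].
  clear -xJ sJ. nia.
have cd : (q-1)*R + 1 <= c + d.
  rewrite leqNgt; apply/negP => hlt.
  have h2 : R*J <= (x + s - J) * J.
    rewrite leq_mul2r; apply/orP; right. rewrite /J in hc hd *. clear -hlt hc hd q1. nia.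
  rewrite /J in Hc h2 key. clear -h2 key Hc. nia.
have cd2 : (q-1)*R <= c * d by clear -cd c1 d1; nia.
have uc : c*(R-1) <= c*R - 1 by clear -c1 R4; nia.
have vd : d*(R-1) <= d*R - 1 by clear -d1 R4; nia.
have h := mulge uc vd.
have h3 : ((q-1)*R) * ((R-1)*(R-1)) <= (c*d) * ((R-1)*(R-1)) by rewrite leq_mul2r cd2 orbT.
have h4 : q*R*R <= (q-1)*R*((R-1)*(R-1)).
  have h5 : 2*R <= (R-1)*(R-1) by clear -R4; nia.
  have h6 : (q-1)*R*(2*R) <= (q-1)*R*((R-1)*(R-1)) by rewrite leq_mul2l h5 orbT.
  apply: leq_trans h6. have p1 : 1 <= q - 1 by lia.
  rewrite -(subnK (ltnW q1)) addnK. move: p1; set p := q - 1 => p1. clear -p1.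
  have h7 : p + 1 <= 2 * p by lia.
  have h := leq_mul h7 (leqnn (R*R)).
  clear -h; nia.
rewrite /J. apply: leq_trans (leq_subr _ _) _. apply: leq_trans h4 _. apply: leq_trans h3 _.
apply: leq_trans h. by rewrite mulnACA.
Qed.

Lemma fvalE q m x y l : 1 < q -> l < m -> 0 < x -> x < q^m - 1 -> 0 < y -> y < q^m - 1 ->
  let J := q^(m-l) in let R := q^l in
  fval q m x y l = (J*R - 1 - (x %% J * R + x %/ J)) * (J*R - 1 - (y %% J * R + y %/ J)).
Proof.
move=> q1 lm x0 xn y0 yn J R.
have eN : J * R = q^m by rewrite /J /R -expnD subnK // ltnW.
have J0 : 0 < J by rewrite expn_gt0 ltnW.
have R0 : 0 < R by rewrite expn_gt0 ltnW.
rewrite /fval -/R -eN -!rotE //; by rewrite eN.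
Qed.

Lemma halfs m : m./2 + uphalf m = m /\ uphalf m <= m./2 + 1.
Proof.
rewrite uphalf_half. have := odd_double_half m. rewrite -muln2. case: (odd m) => /=; lia.
Qed.

Lemma partA q m k x y l : 1 < q -> 3 < m -> 2*k+1 <= m -> 0 < x -> x < q^m - 1 -> 0 < y ->
  y < q^m - 1 -> x*y + q^(m./2) + 1 < q^m -> q^k <= x -> x < q^(k.+1) -> l < m ->
  l <> m - k - 1 -> q^m - 1 - q^(uphalf m - 1) <= fval q m x y l.
Proof.
move=> q1 m3 km x0 xn y0 yn Hc Kx xK lm lne.
have [hfc hce] := halfs m.
rewrite fvalE //.
set J := q^(m-l). set R := q^l.
have eN : J * R = q^m by rewrite /J /R -expnD subnK // ltnW.
have J0 : 0 < J by rewrite expn_gt0 ltnW.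
have R0 : 0 < R by rewrite expn_gt0 ltnW.
have hy := divn_eq y J.
have sJ : y %% J < J by rewrite ltn_pmod.
have bR : y %/ J < R by rewrite ltn_divLR // mulnC eN; lia.
set b := y %/ J in hy bR *. set s := y %% J in hy sJ *.
case: (ltnP (m - l) k.+2) => hj.
  have jk : m - l <= k by lia.
  have j1 : 1 <= m - l by lia.
  set K := q^k. set A := q^(k.+1 - (m-l)). set B := q^(m - k - (m-l)).
  have eA : J * A = q^k.+1 by rewrite /J /A -expnD subnKC //; lia.
  have eR : R = B * K by rewrite /R /B /K -expnD; congr (_ ^ _); lia.
  have aA : x %/ J < A by rewrite ltn_divLR // mulnC eA.
  have AB : A <= B by rewrite leq_exp2l //; lia.
  have JK : J <= K by rewrite leq_exp2l //.
  have K0 : 0 < K by rewrite expn_gt0 ltnW.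
  have HK : K*K <= B*((K-1)*(K-1)).
    case: (leqP 2 (m - k - (m - l))) => hB.
      have B4 : q^2 <= B by rewrite /B leq_exp2l //; lia.
      rewrite expnS expn1 in B4.
      have K2 : q^1 <= K by rewrite /K leq_exp2l //; lia.
      rewrite expn1 in K2.
      have h := leq_mul B4 (leqnn ((K-1)*(K-1))).
      apply: leq_trans h. have q4 : 4 <= q*q by clear -q1; nia.
      apply: leq_trans (leq_mul q4 (leqnn _)). clear -K2 q1. nia.
    have eB : B = q by rewrite /B (_ : m - k - (m - l) = 1) ?expn1 //; lia.
    have K4 : q^2 <= K by rewrite /K leq_exp2l //; lia.
    rewrite expnS expn1 in K4.
    rewrite eB. clear -K4 q1. nia.
  have H := @caseB J R K A B (x %/ J) (x %% J) b s x J0 (ltn_pmod x J0) sJ aA Kx.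
  have : J * R <= (J * R - 1 - (x %% J * R + x %/ J)) * (J * R - 1 - (s * R + b)).
    apply: H => //. rewrite -hy eN; clear -Hc; lia.
  move=> h; apply: leq_trans h; rewrite eN; apply: leq_trans (leq_subr _ _) (leq_subr _ _).
have qx : q * x < J.
  have : q * q^k.+1 <= J by rewrite -expnS leq_exp2l.
  have : q * x < q * q^k.+1 by rewrite ltn_pmul2l // ltnW.
  clear; lia.
have xJ : x < J by clear -qx q1; nia.
rewrite (divn_small xJ) (modn_small xJ) addn0.
have HR : R = 1 \/ q * J <= J * R.
  case: (posnP l) => hl; [left; by rewrite /R hl | right].
  rewrite mulnC leq_mul2l; apply/orP; right. have : q^1 <= R by rewrite /R leq_exp2l. by rewrite expn1.
rewrite -eN. apply: (@caseA q J R x b s (q^(m./2)) (q^(uphalf m - 1)) q1 R0 HR x0 qx sJ bR).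
- by rewrite -hy.
- by rewrite expn_gt0 ltnW.
- rewrite -hy eN. clear -Hc; lia.
move=> FJ. rewrite /R leq_exp2l //. rewrite /J ltn_exp2l // in FJ. clear -FJ hfc lm; lia.
Qed.

Lemma partB q m k x y : 1 < q -> 3 < m -> 2*k+1 <= m -> 0 < x -> x < q^m - 1 -> 0 < y ->
  y < q^m - 1 -> x*y + q^(m./2) + 1 < q^m -> q^k <= x -> x < q^(k.+1) ->
  (odd m -> q^m - 1 <= fval q m x y (m-k-1)) /\
  (~~ odd m -> (q^(m./2) - 1)^2 <= fval q m x y (m-k-1)).
Proof.
move=> q1 m3 km x0 xn y0 yn Hc Kx xK.
have [hfc hce] := halfs m.
have lm : m - k - 1 < m by lia.
rewrite fvalE //.
have ej : m - (m - k - 1) = k.+1 by lia.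
rewrite ej.
set J := q^k.+1. set R := q^(m - k - 1). set K := q^k.
have eN : J * R = q^m by rewrite /J /R -expnD; congr (_ ^ _); lia.
have J0 : 0 < J by rewrite expn_gt0 ltnW.
have R0 : 0 < R by rewrite expn_gt0 ltnW.
have K0 : 0 < K by rewrite expn_gt0 ltnW.
have JKq : J = K * q by rewrite /J /K expnSr.
have hy := divn_eq y J.
have sJ : y %% J < J by rewrite ltn_pmod.
have bR : y %/ J < R by rewrite ltn_divLR // mulnC eN; lia.
set b := y %/ J in hy bR *. set s := y %% J in hy sJ *.
rewrite (divn_small xK) (modn_small xK) addn0.
have Hc' : x * (b*J + s) + q^(m./2) + 1 < J*R by rewrite -hy eN.
have Hc2 : x * (b*J + s) < J*R by clear -Hc'; lia.
have y0' : 0 < b*J + s by rewrite -hy.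
have C1 : 2*k + 3 <= m -> J*R - 1 <= (J*R - 1 - x*R) * (J*R - 1 - (s*R + b)).
  move=> hk3.
  have qJR : q * J <= R.
    have : q^k.+2 <= R by rewrite /R leq_exp2l //; lia.
    by rewrite expnS.
  have qF : q * q <= q^(m./2).
    have : q^2 <= q^(m./2) by rewrite leq_exp2l //; lia.
    by rewrite expnS expn1.
  exact: (@caseC1 q J R K x b s (q^(m./2)) q1 JKq qJR Kx xK x0 sJ y0' qF Hc').
split => hodd.
  rewrite -eN.
  case: (leqP (2*k+3) m) => hk3; first exact: C1.
  have m21 : m = 2*k+1.
    have := halfs m. rewrite uphalf_half hodd. clear -hk3 km; lia.
  have eR : R = K by rewrite /R /K; congr (_ ^ _); lia.
  have eJ : J = q * R by rewrite eR /J /K expnS.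
  have xK' : x < J := xK. have Kx' : K <= x := Kx.
  rewrite eJ in sJ xK' Hc2 *. rewrite -eR in Kx'.
  have R4 : 4 <= R.
    have : q^2 <= R by rewrite /R leq_exp2l //; lia.
    rewrite expnS expn1. clear -q1; nia.
  exact: (@caseC2 q R x b s q1 R4 Kx' xK' sJ Hc2).
case: (leqP (2*k+3) m) => hk3.
  have hm : m./2 + m./2 = m by move: hfc; rewrite uphalf_half (negbTE hodd).
  have eS : q^(m./2) * q^(m./2) = J * R by rewrite -expnD hm eN.
  apply: leq_trans (C1 hk3). rewrite -eS. set S := q^(m./2). clear. rewrite expnS expn1. nia.
have m22 : m = 2*k+2.
  move: hfc; rewrite uphalf_half (negbTE hodd). clear -hk3 km. lia.
have eR : R = J by rewrite /R /J; congr (_ ^ _); lia.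
have eS : q^(m./2) = J by rewrite /J; congr (_ ^ _); rewrite m22; clear; lia.
rewrite eS eR. rewrite eR in Hc2.
have K2 : 2 <= K.
  have : q^1 <= K by rewrite /K leq_exp2l //; clear -m22 m3; lia.
  rewrite expn1. clear -q1; lia.
have J4 : 4 <= J.
  have : q^2 <= J by rewrite /J leq_exp2l //; clear -m22 m3; lia.
  rewrite expnS expn1. clear -q1; nia.
exact: (@caseC1e J K x b s K2 Kx xK J4 sJ Hc2).
Qed.

Lemma unpackZ q m k x y : 1 < q -> in_Zdesk q m k x y ->
  0 < x /\ x < q^m - 1 /\ 0 < y /\ y < q^m - 1 /\ x*y + q^(m./2) + 1 < q^m /\
      q^k <= x /\ x < q^k.+1.
Proof.
move=> q1 /andP [/and5P [h1 h2 h3 h4 h5] /andP [h6 h7]].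
have g1 : 0 < q^k by rewrite expn_gt0 ltnW.
have g2 : 0 < q^k.+1 by rewrite expn_gt0 ltnW.
repeat split => //; lia.
Qed.

Lemma khalf m k : 0 < m -> k <= (m - 1)./2 -> 2*k+1 <= m.
Proof. move=> m0 hk. have := odd_double_half (m-1). rewrite -muln2. case: (odd (m-1)) => /=; lia. Qed.

Lemma eyL n T G : T*G = n.+1 -> 2 <= G -> 1 <= n -> (n - T) * G = (G-2)*n + (n-1).
Proof.
move=> h g2 n1; rewrite mulnBl h -(subnK g2) addnK. move: (G - 2) => g.
rewrite mulnDr mulnC. lia.
Qed.

Theorem lemma4 (q m : nat) (hq : prime_power q) (hm : 3 < m) :
  (* (a) lower bound *)
  (forall k x y l, k <= (m - 1)./2 -> in_Zdesk q m k x y ->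
     l < m -> l <> m - k - 1 ->
     q ^ m - 1 - q ^ (uphalf m - 1) <= fval q m x y l)
  (* (a) attained at k = 0, x = 1, y = q^m-1-q^(floor(m/2)+1), l = ceil(m/2)-1 *)
  /\ (in_Zdesk q m 0 1 (q ^ m - 1 - q ^ (m./2).+1)
      /\ uphalf m - 1 < m /\ uphalf m - 1 <> m - 0 - 1
      /\ fval q m 1 (q ^ m - 1 - q ^ (m./2).+1) (uphalf m - 1)
           = q ^ m - 1 - q ^ (uphalf m - 1))
  (* (b) the case l = m - k - 1 *)
  /\ (forall k x y, k <= (m - 1)./2 -> in_Zdesk q m k x y ->
        (odd m -> q ^ m - 1 <= fval q m x y (m - k - 1))
        /\ (~~ odd m -> (q ^ (m./2) - 1) ^ 2 <= fval q m x y (m - k - 1)))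
  (* (b) equality for even m at k = m/2-1, l = m/2, x = y = q^(m/2)-1 *)
  /\ (~~ odd m ->
        m./2 - 1 <= (m - 1)./2
        /\ m./2 = m - (m./2 - 1) - 1
        /\ in_Zdesk q m (m./2 - 1) (q ^ (m./2) - 1) (q ^ (m./2) - 1)
        /\ fval q m (q ^ (m./2) - 1) (q ^ (m./2) - 1) (m./2)
             = (q ^ (m./2) - 1) ^ 2).
Proof.
have q1 : 1 < q.
  case: hq => p [e [pp [e0 ->]]].
  have := leq_pexp2l (prime_gt0 pp) e0. rewrite expn1. exact: leq_trans (prime_gt1 pp).
have [hfc hce] := halfs m.
split.
  move=> k x y l hk hZ hl hne.
  have [? [? [? [? [? [? ?]]]]]] := unpackZ q m k x y q1 hZ.
  have km : 2*k+1 <= m by apply: khalf hk; clear -hm; lia.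
  by apply: (@partA q m k x y l).
split.
  set fl := m./2 in hfc hce *. set ce := uphalf m in hfc hce *.
  set N := q^m. set T := q^fl.+1. set G := q^(ce - 1). set P := q^fl.
  have eT : T = P * q by rewrite /T /P expnSr.
  have eTG : T * G = N by rewrite /T /G /N -expnD; congr (_ ^ _); clear -hfc hm hce; lia.
  have G2 : q <= G.
    have : q^1 <= G by rewrite /G leq_exp2l //; clear -hfc hm hce; lia.
    by rewrite expn1.
  have P4 : q * q <= P.
    have : q^2 <= P by rewrite /P leq_exp2l //; clear -hfc hm hce; lia.
    by rewrite expnS expn1.
  have TN : T * q <= N.
    have : q^(fl.+2) <= N by rewrite /N leq_exp2l //; clear -hfc hm hce; lia.
    by rewrite expnSr.
  split.
    rewrite /in_Zdesk /in_Zdes expn0 expn1 -/N -/T -/P mul1n.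
    apply/andP; split; first (apply/and5P; split).
    - by [].
    - clear -TN eT P4 q1; nia.
    - clear -TN eT P4 q1; nia.
    - clear -TN eT P4 q1; nia.
    - clear -TN eT P4 q1; nia.
    - clear -q1; apply/andP; repeat split => //; lia.
  split; first by clear -hfc hce hm; lia.
  split; first by clear -hfc hce hm; lia.
  rewrite /fval /negmod -/N -/G mul1n.
  have GN : G < N - 1 by clear -eTG G2 P4 eT q1; nia.
  rewrite (modn_small GN) modn_small; last by clear -GN G2 q1; lia.
  have ey : (N - 1 - T) * G = (G - 2) * (N - 1) + (N - 1 - 1).
    apply: eyL; [rewrite eTG; clear -GN; lia | clear -G2 q1; lia | clear -GN; lia].
  rewrite ey modnMDl (@modn_small (N-1-1)); last by clear -GN; lia.
  have -> : N - 1 - (N - 1 - 1) = 1 by clear -GN; lia.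
  rewrite modn_small ?muln1 //; clear -GN G2 q1; lia.
split.
  move=> k x y hk hZ.
  have [? [? [? [? [? [? ?]]]]]] := unpackZ q m k x y q1 hZ.
  have km : 2*k+1 <= m by apply: khalf hk; clear -hm; lia.
  by apply: (@partB q m k x y).
move=> hev.
set h := m./2 in hfc hce *.
have hm2 : m = h + h by move: hfc hce; rewrite /h uphalf_half (negbTE hev) /=; lia.
have h2 : 2 <= h by clear -hm2 hm; lia.
have eh : (m - 1)./2 = h - 1.
  have := odd_double_half (m-1). rewrite -muln2. case: (odd (m-1)) => /=; clear -hm2 h2; lia.
set S := q^h.
have eS : S * S = q^m by rewrite /S -expnD -hm2.
have S4 : 4 <= S.
  have : q^2 <= S by rewrite /S leq_exp2l.
  rewrite expnS expn1; clear -q1; nia.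
split; first by rewrite eh.
split; first by clear -hm2 h2; lia.
split.
  rewrite /in_Zdesk /in_Zdes -eS (_ : (h - 1).+1 = h); last by clear -h2; lia.
  rewrite -/S.
  have hS : q^(h-1) < S by rewrite /S ltn_exp2l //; clear -h2; lia.
  apply/andP; split; first (apply/and5P; split).
  - clear -S4; lia.
  - clear -S4; nia.
  - clear -S4; lia.
  - clear -S4; nia.
  - clear -S4; nia.
  - apply/andP; split; clear -hS S4; lia.
rewrite /fval /negmod -eS -/S.
have e1 : (S - 1) * S < S * S - 1 by clear -S4; nia.
rewrite (modn_small e1).
have -> : S * S - 1 - (S - 1) * S = S - 1 by clear -S4; nia.
rewrite modn_small; last by clear -S4; nia.
by rewrite expnS expn1.
Qed.
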